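(* Let $k\in\mathbb{N}$ be even and let $n,m$ be odd integers. Then $K_{k,2}(n,m)=2K_{k,1}\left(\frac{n}{2},\frac{m}{2}\right)$.
   Context: For even $k\in\mathbb{N}$ put $k^*=4k$ if $\gcd(k,6)=2$ and $k^*=36k$ if $6\mid k$. For $a\in\{1,2\}$ and $n,m\in\frac12\mathbb{Z}$ define $$K_{k,a}(n,m)=\sum_{\substack{0\le h<ak\\ \gcd(h,ak)=1}} e^{\frac{2\pi i}{ak}(-nh+mh')},$$ where for each $h$, $h'$ is an integer with $hh'\equiv-1\pmod{k^*}$. *)

(* Defs.v *)
From mathcomp Require Import all_boot all_order all_algebra.
From mathcomp Require Import reals trigo.
From mathcomp Require Import complex.
Set Implicit Arguments. Unset Strict Implicit. Unset Printing Implicit Defensive.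
Import Order.TTheory GRing.Theory Num.Theory.
Local Open Scope ring_scope.

Definition kstar (k : nat) : nat :=
  if (6 %| k)%N then (36 * k)%N else (4 * k)%N.

(* h' : an integer with h h' = -1 (mod k^* ); we take the least such
   nonnegative representative (0 if none exists, which never happens
   for h coprime to a*k with k even). *)
Definition hprime (k h : nat) : nat :=
  odflt 0%N (omap (@nat_of_ord _)
    [pick x : 'I_(kstar k) | (kstar k %| h * x + 1)%N]).

Definition ee (R : realType) (x : R) : R[i] :=
  Complex (cos (2 * pi * x)) (sin (2 * pi * x)).

(* K_{k,a}(n,m) for real n, m (the paper uses n, m in (1/2)Z). *)
Definition Kl (R : realType) (k a : nat) (n m : R) : R[i] :=
  \sum_(0 <= h < a * k | coprime h (a * k))
     ee ((- n * h%:R + m * (hprime k h)%:R) / (a * k)%:R).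

(* Main.v *)
Require Import Defs.
From mathcomp Require Import all_boot all_order all_algebra.
From mathcomp Require Import reals trigo.
From mathcomp Require Import complex.
From mathcomp Require Import zify ring.
Set Implicit Arguments.
Import GRing.Theory Num.Theory.
Local Open Scope ring_scope.

Lemma trig_per (R : realType) (f : R -> R) (u : R) (z : int) :
  periodic f (pi *+ 2) -> f (u + z%:~R * (pi *+ 2)) = f u.
Proof.
move=> P; rewrite mulrzl; case: z => a.
  by rewrite -pmulrn (periodicn P).
rewrite NegzE mulrNz -pmulrn.
by rewrite -[in RHS](subrK ((pi *+ 2) *+ a.+1) u) (periodicn P).
Qed.

Lemma ee_shift (R : realType) (x : R) (z : int) : ee (x + z%:~R) = ee x.
Proof.
rewrite /ee.
have E : 2 * pi * (x + z%:~R) = 2 * pi * x + z%:~R * (pi *+ 2).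
  by rewrite -mulr_natl; ring.
by rewrite E (@trig_per R _ _ _ (@cosD2pi R)) (@trig_per R _ _ _ (@sinD2pi R)).
Qed.

Lemma odd_int (n : int) : odd `|n|%N -> exists q : int, n = 2 * q + 1.
Proof.
case: n => a /= H; have Ea := odd_double_half a; rewrite -muln2 in Ea.
  rewrite H in Ea.
  exists (a./2)%:Z; move: Ea; set b := a./2 => Ea; lia.
rewrite /= in H; rewrite (negbTE H) add0n in Ea.
exists (- (a./2)%:Z - 1); rewrite NegzE.
move: Ea; set b := a./2 => Ea; lia.
Qed.

Lemma kstar_props (k h : nat) : (0 < k)%N -> ~~ odd k ->
  [/\ (0 < kstar k)%N, (2 * k %| kstar k)%N & (coprime h k -> coprime h (kstar k))].
Proof.
move=> kp ke; have k2 : (2 %| k)%N by rewrite dvdn2.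
rewrite /kstar; case: ifP => H6; split.
- lia.
- by rewrite (_ : 36 * k = 18 * (2 * k))%N; [exact: dvdn_mull | lia].
- move=> c; rewrite coprimeMr c andbT (_ : 36 = 6 * 6)%N // coprimeMr andbb.
  exact: coprime_dvdr H6 c.
- lia.
- by rewrite (_ : 4 * k = 2 * (2 * k))%N; [exact: dvdn_mull | lia].
- move=> c; rewrite coprimeMr c andbT (_ : 4 = 2 * 2)%N // coprimeMr andbb.
  exact: coprime_dvdr k2 c.
Qed.

Lemma hprime_spec (k h : nat) : (0 < k)%N -> ~~ odd k -> coprime h k ->
  (kstar k %| h * hprime k h + 1)%N.
Proof.
move=> kp ke c; have [Kp _ /(_ c) cK] := @kstar_props k h kp ke.
have [a alt Ha] := Bezoutl h Kp.
rewrite /coprime in cK; rewrite gcdnC in Ha; rewrite (eqP cK) in Ha.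
rewrite /hprime; case: pickP => [x /= Hx | N] //=.
by have := N (Ordinal alt); rewrite /= mulnC addnC Ha.
Qed.

Lemma dvdz_natE (d m : nat) : (d%:Z %| m%:Z)%Z = (d %| m)%N.
Proof. by []. Qed.

Lemma key (k h : nat) : (0 < k)%N -> ~~ odd k -> coprime h k ->
  exists t : int, (hprime k (h + k))%:Z = (hprime k h)%:Z + k%:Z + t * (2 * k)%N%:Z.
Proof.
move=> kp ke c.
have c' : coprime (h + k) k by rewrite /coprime gcdnC gcdnDr gcdnC.
have [_ K2 _] := @kstar_props k h kp ke.
have A := dvdn_trans K2 (@hprime_spec k (h + k) kp ke c').
have B := dvdn_trans K2 (@hprime_spec k h kp ke c).
set x := hprime k (h + k) in A *; set y := hprime k h in B *.
have k2 : (2 %| k)%N by rewrite dvdn2.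
have ho : odd h by rewrite -coprime2n coprime_sym (coprime_dvdr k2 c).
have xo : odd x.
  have := dvdn_trans (dvdn_mulr k (dvdnn 2)) A.
  by rewrite dvdn2 oddD oddM oddD ho (negbTE ke) /= addbT negbK.
have E : (2 %| x + h)%N by rewrite dvdn2 oddD xo ho.
have C : (2 * k %| k * (x + h))%N by rewrite mulnC dvdn_pmul2l.
have D : ((2 * k)%N%:Z %| (x%:Z - y%:Z - k%:Z) * h%:Z)%Z.
  have -> : (x%:Z - y%:Z - k%:Z) * h%:Z =
    ((h + k) * x + 1)%N%:Z - (h * y + 1)%N%:Z - (k * (x + h))%N%:Z.
    rewrite !PoszD !PoszM; ring.
  by rewrite !rpredB // dvdz_natE.
rewrite Gauss_dvdzl in D; last first.
  by rewrite coprimezE /= coprimeMl coprime2n ho coprime_sym c.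
have [t Ht] := dvdzP D; exists t.
by rewrite -Ht; ring.
Qed.

Unset Implicit Arguments.

Theorem lemma2p4 (R : realType) (k : nat) (n m : int) :
  ~~ odd k -> odd `|n|%N -> odd `|m|%N ->
  Kl k 2 (n%:~R : R) m%:~R = 2%:R * Kl k 1 ((n%:~R : R) / 2%:R) (m%:~R / 2%:R).
Proof.
move=> ke /odd_int [a Ea] /odd_int [b Eb].
case: (posnP k) => [->|kp]; first by rewrite /Kl !muln0 !big_geq ?mulr0.
have k2 : (2 %| k)%N by rewrite dvdn2.
have kR : (k%:R : R) != 0 by rewrite pnatr_eq0 -lt0n.
rewrite /Kl mul1n.
rewrite (eq_bigl (fun h => coprime h k)); last first.
  move=> h /=; rewrite coprimeMr; apply/andP/idP => [[]//|c]; split=> //.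
  exact: coprime_dvdr k2 c.
rewrite (@big_cat_nat _ _ _ k) ?leq0n //; last by lia.
rewrite (big_addn 0 (2 * k) k) (_ : 2 * k - k = k)%N; last by lia.
rewrite mulr_natl mulr2n; congr (_ + _).
  apply: eq_bigr => h _; congr ee.
  by rewrite natrM; field; rewrite kR.
have cE : forall i, coprime (i + k) k = coprime i k.
  by move=> i; rewrite /coprime [gcdn _ k]gcdnC gcdnDr gcdnC.
apply: eq_big => [i|i]; first exact: cE.
rewrite cE => c.
have [t Ht] := @key k i kp ke c.
have Hx := congr1 (fun z : int => (z%:~R : R)) Ht.
rewrite /= !intrD intrM -!pmulrn in Hx.
rewrite Hx Ea Eb -[in RHS](@ee_shift R _ (b - a + t * (2 * b + 1))).
congr ee.
rewrite !natrD !(intrD, intrB, intrM) addr0. field.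
by rewrite kR /= -natrD pnatr_eq0; lia.
Qed.
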